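(* Let $G=(V,E)$ be a finite, connected, non-complete undirected graph, and let $P$ be the distribution of a random vector $\mathbf X=(X_\alpha)_{\alpha\in V}$ that is perfectly Markov to $G$. Assume $d_2(G)\le |V|-2$. Then there exists $k\in\{1,\dots,|V|-2\}$ such that $d_2(G_k)\le k$ and $G=G_k$, where $G_k$ is the $k$-graph of $P$.
   Context: For a vertex $\alpha$, $d(\alpha\mid G)$ is the number of neighbours of $\alpha$ in $G$. The degree two of $\alpha$ is $d_2(\alpha\mid G)=|\{\gamma:\gamma\text{ adjacent to }\alpha,\ d(\gamma\mid G)\ge2\}|$, and $d_2(G)=\max_{\alpha\in V}d_2(\alpha\mid G)$. A set $S$ separates disjoint nonempty vertex sets $A,B$ in $G$ if every path from $A$ to $B$ meets $S$. Write $\mathbf X_S=(X_\gamma)_{\gamma\in S}$. $P$ satisfies the global Markov property w.r.t. $G$ if, for all disjoint $A,B,S\subseteq V$ with $A,B$ nonempty, $S$ separating $A,B$ implies $\mathbf X_A\perp\!\!\!\perp\mathbf X_B\mid\mathbf X_S$. $P$ is perfectly Markov to $G$ if it satisfies the global Markov property and, for all disjoint nonempty $A,B,S\subseteq V$, $\mathbf X_A\perp\!\!\!\perp\mathbf X_B\mid\mathbf X_S$ implies that $S$ separates $A$ and $B$ in $G$. For $k\in\{0,\dots,|V|-2\}$, the $k$-graph $G_k=(V,E_k)$ has distinct $\alpha,\beta$ non-adjacent iff there exists $S\subseteq V\setminus\{\alpha,\beta\}$ with $|S|=k$ and $X_\alpha\perp\!\!\!\perp X_\beta\mid\mathbf X_S$.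 *)

(* Defs.v *)
From mathcomp Require Import all_boot.
Set Implicit Arguments. Unset Strict Implicit. Unset Printing Implicit Defensive.

Section Graphs.
Variable V : finType.

Definition simple_graph (e : rel V) : Prop := symmetric e /\ irreflexive e.

Definition connected (e : rel V) : Prop := forall x y : V, connect e x y.

Definition complete (e : rel V) : Prop := forall x y : V, x != y -> e x y.

Definition deg (e : rel V) (x : V) : nat := #|[set y | e x y]|.

Definition deg2 (e : rel V) (x : V) : nat := #|[set y | e x y & 1 < deg e y]|.

Definition deg2G (e : rel V) : nat := \max_(x : V) deg2 e x.

Definition avoid (e : rel V) (S : {set V}) : rel V :=
  [rel x y | [&& e x y, x \notin S & y \notin S]].

(* S separates A and B: every path from A to B meets S, i.e. no path from
   a vertex of A to a vertex of B using only vertices outside S. *)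
Definition separates (e : rel V) (S A B : {set V}) : Prop :=
  forall a b, a \in A -> b \in B -> a \notin S -> b \notin S ->
    ~~ connect (avoid e S) a b.

(* CI A B S stands for  X_A _||_ X_B | X_S  for the distribution P. *)
Definition global_Markov (CI : {set V} -> {set V} -> {set V} -> bool)
  (e : rel V) : Prop :=
  forall A B S : {set V}, [disjoint A & B] -> [disjoint A & S] ->
    [disjoint B & S] -> A != set0 -> B != set0 ->
    separates e S A B -> CI A B S.

Definition perfectly_Markov (CI : {set V} -> {set V} -> {set V} -> bool)
  (e : rel V) : Prop :=
  global_Markov CI e /\
  forall A B S : {set V}, [disjoint A & B] -> [disjoint A & S] ->
    [disjoint B & S] -> A != set0 -> B != set0 -> S != set0 ->
    CI A B S -> separates e S A B.

Definition kgraph (CI : {set V} -> {set V} -> {set V} -> bool) (k : nat) : rel V :=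
  fun a b => (a != b) &&
    ~~ [exists S : {set V},
          [&& S \subset ~: [set a; b], #|S| == k & CI [set a] [set b] S]].

End Graphs.

(* Main.v *)
Require Import Defs.
From mathcomp Require Import all_boot.
From Stdlib Require Import FunctionalExtensionality Classical.

Lemma pad_set (T : finType) (U : {set T}) n : forall A : {set T},
  A \subset U -> #|A| + n <= #|U| ->
  exists B : {set T}, [/\ A \subset B, B \subset U & #|B| = #|A| + n].
Proof.
elim: n => [|n IH] A sAU hc.
  by exists A; rewrite addn0.
have hlt : #|A| < #|U| by apply: leq_trans hc; rewrite addnS ltnS leq_addr.
have : A \proper U by rewrite properEcard sAU hlt.
case/properP=> _ [x xU xA].
have sxU : x |: A \subset U by rewrite subUset sub1set xU sAU.
have cx : #|x |: A| = #|A|.+1 by rewrite cardsU1 xA.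
have [B [h1 h2 h3]] := IH (x |: A) sxU ltac:(by rewrite cx addSnnS).
exists B; split=> //.
  by apply: subset_trans h1; apply: subsetUr.
by rewrite h3 cx addSnnS.
Qed.

Section Main.
Variable V : finType.
Variable e : rel V.
Hypothesis esym : symmetric e.
Hypothesis eirr : irreflexive e.

Lemma sep_lemma (a b : V) (S : {set V}) :
  a != b -> ~~ e a b -> a \notin S -> b \notin S ->
  [set y | e a y & 1 < deg e y] \subset S ->
  ~~ connect (avoid e S) a b.
Proof.
move=> nab neab aS bS sub.
pose P x := (x == a) || (e a x && (deg e x <= 1)).
suff H : forall p x, P x -> path (avoid e S) x p -> P (last x p).
  apply/negP=> /connectP [p hp hl].
  have := H p a ltac:(by rewrite /P eqxx) hp; rewrite -hl /P eq_sym (negbTE nab).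
  by rewrite (negbTE neab).
elim=> [|y p IH] x //= Px /andP [hxy hp]; apply: IH hp.
move: hxy; rewrite /avoid /= => /and3P [exy xS yS].
case/orP: Px => [/eqP xa | /andP [eax dx]].
  rewrite /P; apply/orP; right; subst x; rewrite exy /=.
  rewrite leqNgt; apply/negP=> hd; move/negP: yS; apply.
  by apply: (subsetP sub); rewrite inE exy hd.
rewrite /P; apply/orP; left; apply/negPn/negP=> nya.
have : 2 <= deg e x.
  rewrite /deg (cardsD1 a) inE (esym x a) eax add1n ltnS card_gt0.
  by apply/set0Pn; exists y; rewrite !inE nya exy.
by rewrite ltnNge dx.
Qed.
End Main.

Theorem corollary9 (V : finType) (e : rel V)
  (CI : {set V} -> {set V} -> {set V} -> bool) :
  simple_graph e -> connected e -> ~ complete e ->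
  perfectly_Markov CI e ->
  deg2G e <= #|V| - 2 ->
  exists k : nat, [/\ 1 <= k <= #|V| - 2,
    deg2G (kgraph CI k) <= k &
    forall x y : V, kgraph CI k x y = e x y].
Proof.
move=> [esym eirr] conn ncomp [gm pm] hd2.
have [a0 [b0 [nab0 ne0]]] : exists a b, a != b /\ ~~ e a b.
  apply: Classical_Prop.NNPP => H; apply: ncomp => x y nxy.
  apply/negPn/negP => nexy; by apply: H; exists x, y.
have V3 : 3 <= #|V|.
  have := conn a0 b0; case/connectP=> [[|c p] /= hp hl].
    by rewrite hl eqxx in nab0.
  case/andP: hp => eac _.
  have ca : c != a0 by apply/eqP=> ca; rewrite ca eirr in eac.
  have cb : c != b0 by apply/eqP=> cb; subst c; rewrite eac in ne0.
  rewrite (cardD1 a0) (cardD1 b0) (cardD1 c) !inE ca cb eq_sym nab0 /=.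
  by rewrite !add1n.
pose k := maxn (deg2G e) 1.
have hk1 : 1 <= k by rewrite leq_maxr.
have hk2 : k <= #|V| - 2.
  by rewrite geq_max hd2 /= subn_gt0.
have Hk : forall x y, kgraph CI k x y = e x y.
  move=> a b; rewrite /kgraph.
  have [<-|nab] := eqVneq a b; first by rewrite eirr.
  have sa1 : [set a] != set0 by apply/set0Pn; exists a; rewrite set11.
  have sb1 : [set b] != set0 by apply/set0Pn; exists b; rewrite set11.
  have dab : [disjoint [set a] & [set b]] by rewrite disjoints1 inE.
  have aU : a \notin ~: [set a; b] by rewrite !inE eqxx.
  have bU : b \notin ~: [set a; b] by rewrite !inE eqxx orbT.
  have dS : forall S : {set V}, S \subset ~: [set a; b] ->
     [disjoint [set a] & S] /\ [disjoint [set b] & S].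
    move=> S sS; split; rewrite disjoints1; apply/negP => h.
    - by move: aU; rewrite (subsetP sS _ h).
    - by move: bU; rewrite (subsetP sS _ h).
  rewrite /=; case eab: (e a b) => /=.
    apply/negP=> /existsP [S /and3P [sS /eqP cS hci]].
    have [d1 d2] := dS S sS.
    have S0 : S != set0 by rewrite -card_gt0 cS.
    have := pm _ _ _ dab d1 d2 sa1 sb1 S0 hci a b (set11 a) (set11 b).
    have aS : a \notin S by apply: contra aU; apply: (subsetP sS).
    have bS : b \notin S by apply: contra bU; apply: (subsetP sS).
    move=> /(_ aS bS) /negP; apply; apply: connect1.
    by rewrite /avoid /= eab aS bS.
  apply/negbF/existsP.
  pose S0 := [set y | e a y & 1 < deg e y].
  have sS0 : S0 \subset ~: [set a; b].
    apply/subsetP=> y; rewrite !inE => /andP [eay _].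
    apply/negP=> /orP [/eqP ya|/eqP yb]; subst y.
    - by rewrite eirr in eay.
    - by rewrite eab in eay.
  have c0 : #|S0| <= k.
    apply: leq_trans (leq_maxl _ _); exact: (leq_bigmax (F := deg2 e) a).
  have cU : #|~: [set a; b]| = #|V| - 2.
    by rewrite cardsCs setCK cards2 nab.
  have [S [h1 h2 h3]] := @pad_set V _ (k - #|S0|) _ sS0
     ltac:(by rewrite subnKC // cU).
  rewrite subnKC // in h3.
  exists S; rewrite h2 h3 eqxx /=.
  have [d1 d2] := dS S h2.
  apply: gm => //.
  move=> x y; rewrite !inE => /eqP -> /eqP -> aS bS.
  apply: sep_lemma => //; by rewrite eab.
have Heq : kgraph CI k = e.
  by apply: functional_extensionality=> x; apply: functional_extensionality=> y.
exists k; rewrite Heq; split=> //; first by rewrite hk1 hk2.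
exact: leq_maxl.
Qed.
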